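(* Let $\mathcal{Q}$, $\mathcal{S}$, $\mathcal{A}$ be countable sets (questions, solutions, answers), let $\mathcal{D}$ be a probability distribution on $\mathcal{Q}$, and let $a^*:\mathcal{Q}\to\mathcal{A}$ assign to each question its reference answer. For each $q$, let $\pi_\theta(\cdot\mid q)$ be a probability distribution on $\mathcal{S}$ and for each $s$ let $\pi_\theta(\cdot\mid s,q)$ be a probability distribution on $\mathcal{A}$, with joint law $\pi_\theta(s,a\mid q)=\pi_\theta(s\mid q)\pi_\theta(a\mid s,q)$ and answer marginal $\pi_\theta(a\mid q)=\sum_s\pi_\theta(s\mid q)\pi_\theta(a\mid s,q)$. For $a$ with $\pi_\theta(a\mid q)>0$ define $\pi_\theta(s'\mid q,a)=\pi_\theta(s'\mid q)\pi_\theta(a\mid s',q)/\pi_\theta(a\mid q)$ and the conditional expectation reward $$\rho(a,a^*(q))=\sum_{s'\in\mathcal{S}}\pi_\theta(s'\mid q,a)\,\pi_\theta(a^*(q)\mid s',q).$$ Then $$\mathcal{L}_\rho(\theta):=\mathbb{E}_{q\sim\mathcal{D},\,(s,a)\sim\pi_\theta(\cdot\mid q)}\big[\rho(a,a^*(q))\big]=\mathbb{E}_{q\sim\mathcal{D},\,(s,a)\sim\pi_\theta(\cdot\mid q)}\big[\mathbb{I}(a=a^*(q))\big],$$ where $\mathbb{I}(a=a^*(q))$ is $1$ if $a=a^*(q)$ and $0$ otherwise.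
   Context: Here $\rho(a,a^* )$ is the conditional expectation reward (CER): the expected likelihood, under the policy, of generating the reference answer $a^*$ from a solution drawn from the posterior over solutions given that the answer $a$ was generated. It is only evaluated at answers $a$ that occur with positive probability, so the left-hand expectation is well defined. *)

(* Defs.v *)
From HB Require Import structures.
From mathcomp Require Import all_boot all_order all_algebra.
From mathcomp Require Import all_classical all_reals all_analysis.
Set Implicit Arguments. Unset Strict Implicit. Unset Printing Implicit Defensive.
Import Order.TTheory GRing.Theory Num.Theory.
Local Open Scope classical_set_scope.
Local Open Scope ring_scope.
Local Open Scope ereal_scope.

Definition is_prob (R : realType) (T : countType) (p : T -> R) : Prop :=
  (forall t, (0 <= p t)%R) /\ \esum_(t in [set: T]) (p t)%:E = 1.

(* answer marginal  pi(a|q) = sum_s pi(s|q) pi(a|s,q)  (real valued; it is <= 1) *)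
Definition marg (R : realType) (Q S A : countType)
  (pS : Q -> S -> R) (pA : Q -> S -> A -> R) (q : Q) (a : A) : R :=
  fine (\esum_(s in [set: S]) (pS q s * pA q s a)%:E).

Definition posterior (R : realType) (Q S A : countType)
  (pS : Q -> S -> R) (pA : Q -> S -> A -> R) (q : Q) (a : A) (s' : S) : R :=
  (pS q s' * pA q s' a / marg pS pA q a)%R.

Definition cer (R : realType) (Q S A : countType)
  (pS : Q -> S -> R) (pA : Q -> S -> A -> R) (q : Q) (a astar : A) : \bar R :=
  \esum_(s' in [set: S]) (posterior pS pA q a s' * pA q s' astar)%:E.

Definition expect (R : realType) (Q S A : countType) (D : Q -> R)
  (pS : Q -> S -> R) (pA : Q -> S -> A -> R) (f : Q -> A -> \bar R) : \bar R :=
  \esum_(q in [set: Q]) \esum_(s in [set: S]) \esum_(a in [set: A])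
     (D q * pS q s * pA q s a)%:E * f q a.

(* Main.v *)
Require Import Defs.
From HB Require Import structures.
From mathcomp Require Import all_boot all_order all_algebra.
From mathcomp Require Import all_classical all_reals all_analysis.
From mathcomp Require Import ring.
Import Order.TTheory GRing.Theory Num.Theory.
Local Open Scope classical_set_scope.
Local Open Scope ring_scope.
Local Open Scope ereal_scope.
Lemma esumZl (R : realType) (T : choiceType) (I : set T) (r : R) (a : T -> \bar R) :
  (0 <= r)%R -> (forall i, 0 <= a i) ->
  \esum_(i in I) (r%:E * a i) = r%:E * \esum_(i in I) a i.
Proof.
move=> r0 a0; rewrite /esum -ereal_supZl//; last first.
  by apply/set0P; exists 0; exists set0; [exact: fsets_set0|rewrite fsbig_set0].
rewrite image_comp; congr ereal_sup; apply: eq_imagel => A _ /=.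
by rewrite ge0_mule_fsumr.
Qed.

Lemma esum_swap (R : realType) (T1 T2 : choiceType) (f : T1 -> T2 -> \bar R) :
  (forall i j, 0 <= f i j) ->
  \esum_(i in [set: T1]) \esum_(j in [set: T2]) f i j =
  \esum_(j in [set: T2]) \esum_(i in [set: T1]) f i j.
Proof.
move=> f0; rewrite (@esum_esum _ _ _ [set: T1] (fun=> [set: T2]))//.
rewrite (@esum_esum _ _ _ [set: T2] (fun=> [set: T1]))//.
rewrite (reindex_esum ([set: T2] `*`` fun=> [set: T1]) _ (fun x => (x.2, x.1)))//.
split=> //=.
- by move=> [i1 i2] [j1 j2] /= _ _ [] -> ->.
- by move=> [i1 i2] _ /=; exists (i2, i1).
Qed.

Lemma esum_term (R : realType) (T : choiceType) (a : T -> \bar R) t :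
  (forall i, 0 <= a i) -> a t <= \esum_(i in [set: T]) a i.
Proof.
move=> a0; apply: esum_ge; exists [set t]; last by rewrite fsbig_set1.
by split => //; exact: finite_set1.
Qed.

Lemma esum_ind (R : realType) (T : choiceType) (a : T -> \bar R) t :
  0 <= a t ->
  \esum_(i in [set: T]) (if i == t then a i else 0) = a t.
Proof.
move=> a0; rewrite -(esum_set1 (a:=a) a0) [RHS]esum_mkcond; apply: eq_esum => i _.
rewrite /= in_set1; by [].
Qed.
Theorem theorem2 (R : realType) (Q S A : countType)
  (D : Q -> R) (astar : Q -> A)
  (pS : Q -> S -> R) (pA : Q -> S -> A -> R)
  (hD : is_prob D)
  (hS : forall q, is_prob (pS q))
  (hA : forall q s, is_prob (pA q s)) :
  expect D pS pA (fun q a => cer pS pA q a (astar q)) =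
  expect D pS pA (fun q a => ((a == astar q)%:R)%:E).
Proof.
have D0 q : (0 <= D q)%R by exact: hD.1.
have S0 q s : (0 <= pS q s)%R by exact: (hS q).1.
have A0 q s a : (0 <= pA q s a)%R by exact: (hA q s).1.
have A1 q s a : (pA q s a <= 1)%R.
  rewrite -lee_fin -(hA q s).2; apply: (@esum_term _ _ (fun a => (pA q s a)%:E)).
  by move=> i; rewrite lee_fin.
rewrite /expect; apply: eq_esum => q _.
have -> : \esum_(s in [set: S]) \esum_(a in [set: A])
     (D q * pS q s * pA q s a)%:E * ((a == astar q)%:R)%:E =
   \esum_(s in [set: S]) (D q * pS q s * pA q s (astar q))%:E.
  apply: eq_esum => s _.
  rewrite -(@esum_ind _ _ (fun a => (D q * pS q s * pA q s a)%:E)); last first.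
    by rewrite lee_fin !mulr_ge0.
  apply: eq_esum => a _; case: eqP => [->|_]; first by rewrite mule1.
  by rewrite mule0.
have cer0 a : 0 <= cer pS pA q a (astar q).
  apply: esum_ge0 => s _; rewrite lee_fin /posterior mulr_ge0 ?A0//.
  rewrite mulr_ge0 ?invr_ge0 ?mulr_ge0//.
  by rewrite /marg fine_ge0// esum_ge0// => i _; rewrite lee_fin mulr_ge0.
rewrite esum_swap; last by move=> s a; rewrite mule_ge0// lee_fin !mulr_ge0.
have key a : \esum_(s in [set: S]) (D q * pS q s * pA q s a)%:E * cer pS pA q a (astar q)
   = \esum_(s in [set: S]) (D q * (pS q s * pA q s a * pA q s (astar q)))%:E.
  set M := \esum_(s in [set: S]) (pS q s * pA q s a)%:E.
  have M0 : 0 <= M by apply: esum_ge0 => i _; rewrite lee_fin mulr_ge0.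
  have M1 : M <= 1.
    rewrite -(hS q).2; apply: le_esum => i _; rewrite lee_fin.
    by rewrite -[leRHS]mulr1 ler_wpM2l.
  have Mfin : M \is a fin_num by rewrite ge0_fin_numE// (le_lt_trans M1)// ltry.
  have hM : M = (marg pS pA q a)%:E by rewrite /marg fineK.
  have m0 : (0 <= marg pS pA q a)%R by rewrite -lee_fin -hM.
  have [mz|mnz] := eqVneq (marg pS pA q a) 0%R.
    have z s : (pS q s * pA q s a = 0)%R.
      apply/eqP; rewrite eq_le mulr_ge0// andbT -lee_fin -mz -hM.
      by apply: (@esum_term _ _ (fun s => (pS q s * pA q s a)%:E)) => i; rewrite lee_fin mulr_ge0.
    apply: eq_esum => s _.
    have -> : (D q * pS q s * pA q s a = 0)%R by rewrite -mulrA z mulr0.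
    by rewrite mul0e z mul0r mulr0.
  set K := \esum_(s in [set: S]) (pS q s * pA q s a * pA q s (astar q))%:E.
  have K0 : 0 <= K by apply: esum_ge0 => i _; rewrite lee_fin !mulr_ge0.
  have KM : K <= M.
    apply: le_esum => i _; rewrite lee_fin.
    by rewrite -[leRHS]mulr1 ler_wpM2l ?mulr_ge0.
  have Kfin : K \is a fin_num by rewrite ge0_fin_numE// (le_lt_trans KM)// (le_lt_trans M1)// ltry.
  have hcer : cer pS pA q a (astar q) = ((marg pS pA q a)^-1 * fine K)%:E.
    rewrite EFinM fineK// -esumZl ?invr_ge0//; last by move=> i; rewrite lee_fin !mulr_ge0.
    apply: eq_esum => s _; rewrite -EFinM /posterior; congr EFin; ring.
  rewrite hcer.
  transitivity (\esum_(s in [set: S]) ((D q * ((marg pS pA q a)^-1 * fine K))%:E * (pS q s * pA q s a)%:E)).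
    by apply: eq_esum => s _; rewrite -!EFinM; congr EFin; ring.
  rewrite esumZl; last 2 first.
  - by rewrite mulr_ge0 ?mulr_ge0 ?invr_ge0 ?fine_ge0.
  - by move=> i; rewrite lee_fin mulr_ge0.
  rewrite -/M hM -EFinM.
  transitivity ((D q)%:E * K).
    by rewrite -[in RHS](fineK Kfin) -EFinM; congr EFin; field.
  rewrite -esumZl//; last by move=> i; rewrite lee_fin !mulr_ge0.
under eq_esum do rewrite key.
rewrite esum_swap; last by move=> a s; rewrite lee_fin !mulr_ge0.
apply: eq_esum => s _.
transitivity (\esum_(a in [set: A]) ((D q * pS q s * pA q s (astar q))%:E * (pA q s a)%:E)).
  by apply: eq_esum => a _; rewrite -EFinM; congr EFin; ring.
rewrite esumZl ?mulr_ge0//; last by move=> a; rewrite lee_fin.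
by rewrite (hA q s).2 mule1.
Qed.
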